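(* Let $\Sigma=(X,\mathcal D,\phi)$ be an RFC system. If there is a bounded set $\mathcal A\subset X$ such that $\Sigma$ possesses a non-coercive Lyapunov function with respect to $\mathcal A$, then $\Sigma$ is practically UGAS, i.e. there exist $\beta\in\mathcal{KL}$ and $c>0$ such that $\|\phi(t,x,d)\|\le\beta(\|x\|,t)+c$ for all $x\in X$, $d\in\mathcal D$, $t\ge0$.
   Context: $\mathbb R_+=[0,\infty)$. A system is a triple $\Sigma=(X,\mathcal D,\phi)$ where $(X,\|\cdot\|)$ is a normed linear space; $D$ is a nonempty subset of some normed linear space; $\mathcal D$ is a set of functions $d:\mathbb R_+\to D$ closed under time shifts $d\mapsto d(\cdot+\tau)$, $\tau\ge0$, and under concatenation ($d(s)=d_1(s)$ for $s\in[0,t]$, $d(s)=d_2(s-t)$ for $s>t$, any $d_1,d_2\in\mathcal D$, $t>0$); and $\phi:\mathbb R_+\times X\times\mathcal D\to X$ is an everywhere defined map with $\phi(0,x,d)=x$; $\phi(t,x,d)=\phi(t,x,\tilde d)$ whenever $d=\tilde d$ on $[0,t]$; $t\mapsto\phi(t,x,d)$ continuous; and $\phi(h,\phi(t,x,d),d(t+\cdot))=\phi(t+h,x,d)$ for all $t,h\ge0$. $\Sigma$ is RFC if for all $C,\tau>0$: $\sup\{\|\phi(t,x,d)\|:\|x\|\le C,d\in\mathcal D,t\in[0,\tau]\}<\infty$. $\|x\|_{\mathcal A}=\inf_{y\in\mathcal A}\|x-y\|$. $\mathcal K$: continuous strictly increasing $\gamma:\mathbb R_+\to\mathbb R_+$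 with $\gamma(0)=0$; $\mathcal K_\infty$: unbounded elements of $\mathcal K$; $\mathcal{KL}$: continuous $\beta:\mathbb R_+^2\to\mathbb R_+$ with $\beta(\cdot,t)\in\mathcal K$ for all $t$ and $\beta(r,\cdot)$ strictly decreasing to $0$ for all $r>0$. For continuous $V:X\to\mathbb R$, $x\in X$, $d\in\mathcal D$, define the Dini derivative $\dot V_d(x)=\liminf_{t\to0^+}\frac1t\big(V(\phi(t,x,d))-V(x)\big)$. A continuous $V:X\to\mathbb R_+$ is a non-coercive Lyapunov function for $\Sigma$ w.r.t. a bounded set $\mathcal A$ if $V(x)=0$ for $x\in\mathcal A$ and there are $\psi_2\in\mathcal K_\infty$, $\alpha\in\mathcal K$ with $0<V(x)\le\psi_2(\|x\|_{\mathcal A})$ for all $x\in X\setminus\mathcal A$ and $\dot V_d(x)\le-\alpha(\|x\|_{\mathcal A})$ for all $x\in X\setminus\mathcal A$, $d\in\mathcal D$. *)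

(* Defs.v *)
From HB Require Import structures.
From mathcomp Require Import all_boot all_order all_algebra.
From mathcomp Require Import all_classical all_reals all_analysis.
Set Implicit Arguments. Unset Strict Implicit. Unset Printing Implicit Defensive.
Import Order.TTheory GRing.Theory Num.Theory.
Import numFieldNormedType.Exports.
Local Open Scope classical_set_scope.
Local Open Scope ring_scope.

(* Functions on R_+ are represented as functions on R; only their values on
   [0, +oo) matter. *)

Definition classK {R : realType} (g : R -> R) : Prop :=
  {within [set t : R | 0 <= t], continuous g} /\
  (forall a b : R, 0 <= a -> a < b -> g a < g b) /\
  g 0 = 0.

Definition classKinf {R : realType} (g : R -> R) : Prop :=
  classK g /\ (forall M : R, exists r : R, 0 <= r /\ M < g r).

Definition classKL {R : realType} (beta : R -> R -> R) : Prop :=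
  {within [set p : R * R | 0 <= p.1 /\ 0 <= p.2],
     continuous (fun p : R * R => beta p.1 p.2)} /\
  (forall t : R, 0 <= t -> classK (fun r => beta r t)) /\
  (forall r : R, 0 < r ->
     (forall s t : R, 0 <= s -> s < t -> beta r t < beta r s) /\
     (beta r t @[t --> +oo] --> 0)).

(* A system Sigma = (X, Dc, phi), inputs d : R_+ -> D with D a subset of the
   normed space E. *)
Definition is_system {R : realType} (X E : normedModType R) (D : set E)
  (Dc : set (R -> E)) (phi : R -> X -> (R -> E) -> X) : Prop :=
  D !=set0 /\
  (forall d, Dc d -> forall s : R, 0 <= s -> D (d s)) /\
  (forall d, Dc d -> forall tau : R, 0 <= tau -> Dc (fun s => d (s + tau))) /\
  (forall d1 d2, Dc d1 -> Dc d2 -> forall t : R, 0 < t ->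
     Dc (fun s => if s <= t then d1 s else d2 (s - t))) /\
  (forall x d, Dc d -> phi 0 x d = x) /\
  (forall t x d d', Dc d -> Dc d' -> 0 <= t ->
     (forall s, 0 <= s <= t -> d s = d' s) -> phi t x d = phi t x d') /\
  (forall x d, Dc d -> {within [set t : R | 0 <= t], continuous (fun t => phi t x d)}) /\
  (forall x d t h, Dc d -> 0 <= t -> 0 <= h ->
     phi h (phi t x d) (fun s => d (t + s)) = phi (t + h) x d).

Definition RFC {R : realType} (X E : normedModType R)
  (Dc : set (R -> E)) (phi : R -> X -> (R -> E) -> X) : Prop :=
  forall C tau : R, 0 < C -> 0 < tau ->
    exists M : R, forall x d t, `|x| <= C -> Dc d -> 0 <= t <= tau ->
      `|phi t x d| <= M.

Definition dist_set {R : realType} (X : normedModType R) (A : set X) (x : X) : R :=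
  inf [set `|x - y| | y in A].

(* lower right Dini derivative, as an extended real:
   liminf_{t -> 0+} (V(phi t x d) - V x) / t
   = sup_{e > 0} inf_{0 < t < e} (V(phi t x d) - V x) / t *)
Definition dini {R : realType} (X E : normedModType R)
  (phi : R -> X -> (R -> E) -> X) (V : X -> R) (x : X) (d : R -> E) : \bar R :=
  ereal_sup [set ereal_inf [set ((V (phi t x d) - V x) / t)%:E
                             | t in [set t : R | 0 < t < e]]
            | e in [set e : R | 0 < e]].

Definition noncoercive_LF {R : realType} (X E : normedModType R)
  (Dc : set (R -> E)) (phi : R -> X -> (R -> E) -> X) (A : set X) (V : X -> R) : Prop :=
  continuous V /\ (forall x, 0 <= V x) /\
  (forall x, A x -> V x = 0) /\
  exists psi2 alpha : R -> R, classKinf psi2 /\ classK alpha /\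
    (forall x, ~ A x -> 0 < V x /\ V x <= psi2 (dist_set A x)) /\
    (forall x d, ~ A x -> Dc d ->
       (dini phi V x d <= (- alpha (dist_set A x))%:E)%E).

(* Main.v *)
Require Import Defs.
From HB Require Import structures.
From mathcomp Require Import all_boot all_order all_algebra.
From mathcomp Require Import all_classical all_reals all_analysis.
From mathcomp Require Import ring lra.
Import Order.TTheory GRing.Theory Num.Theory.
Import numFieldNormedType.Exports.
Local Open Scope classical_set_scope.
Local Open Scope ring_scope.

Definition h01 {R : realType} (u : R) : R := (`|u| - `|u - 1| + 1) / 2.

Lemma h01_le0 {R : realType} {u : R} : u <= 0 -> h01 u = 0.
Proof.
move=> u0; rewrite /h01 ler0_norm // ler0_norm; last lra.
lra.
Qed.

Lemma h01_ge1 {R : realType} {u : R} : 1 <= u -> h01 u = 1.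
Proof.
move=> u1; rewrite /h01 ger0_norm; last lra.
rewrite ger0_norm; last lra.
lra.
Qed.

Lemma h01_mid {R : realType} {u : R} : 0 <= u <= 1 -> h01 u = u.
Proof.
move=> /andP[u0 u1]; rewrite /h01 ger0_norm // ler0_norm; last lra.
lra.
Qed.

Lemma h01_ge0 {R : realType} {u : R} : 0 <= h01 u.
Proof.
have [u0|u0] := leP u 0; first by rewrite h01_le0.
have [u1|u1] := leP u 1; first by rewrite h01_mid; [lra | apply/andP; split; lra].
by rewrite h01_ge1 ?ltW.
Qed.

Lemma h01_mono {R : realType} (u v : R) : u <= v -> h01 u <= h01 v.
Proof.
move=> uv.
have [u0|u0] := leP u 0; first by rewrite (h01_le0 u0) h01_ge0.
have [v1|v1] := leP 1 v.
  rewrite (h01_ge1 v1).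
  have [u1|u1] := leP 1 u; first by rewrite (h01_ge1 u1).
  by rewrite h01_mid; [lra | apply/andP; split; lra].
rewrite (h01_mid (u := v)); last by apply/andP; split; lra.
by rewrite h01_mid //; apply/andP; split; lra.
Qed.

Lemma h01_cont {R : realType} : continuous (@h01 R).
Proof.
move=> x; rewrite /h01.
apply: cvgM; last exact: cvg_cst.
apply: cvgD; last exact: cvg_cst.
apply: cvgB; first exact: norm_continuous.
apply: (continuous_comp (f := fun u : R => u - 1)); last exact: norm_continuous.
by apply: cvgB; [exact: cvg_id | exact: cvg_cst].
Qed.

Definition KN {R : realType} (b : nat -> R) (N : nat) (r : R) : R :=
  r + \sum_(0 <= m < N) b m * h01 (r - m%:R).

Definition Kf {R : realType} (b : nat -> R) (r : R) : R := KN b (Num.truncn r).+1 r.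

Lemma KN_ext {R : realType} (b : nat -> R) (N : nat) (r : R) :
  ((Num.truncn r).+1 <= N)%N -> KN b N r = Kf b r.
Proof.
move=> hN; rewrite /Kf /KN (big_cat_nat (leq0n _) hN) /=.
rewrite (_ : \sum_((Num.truncn r).+1 <= i < N) b i * h01 (r - i%:R) = 0) ?addr0 //.
rewrite big_nat_cond big1 // => m /andP[/andP[hm _] _].
rewrite h01_le0 ?mulr0 // subr_le0.
apply: ltW; apply: lt_le_trans (truncnS_gt r) _.
by rewrite ler_nat.
Qed.

Lemma KN_cont {R : realType} (b : nat -> R) (N : nat) : continuous (KN b N).
Proof.
move=> x; rewrite /KN.
apply: cvgD; first exact: cvg_id.
elim: N => [|N IH].
  under eq_fun do rewrite big_nil.
  by rewrite big_nil; exact: cvg_cst.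
under eq_fun do rewrite big_nat_recr //=.
rewrite big_nat_recr //=.
apply: cvgD; first exact: IH.
apply: cvgM; first exact: cvg_cst.
apply: (continuous_comp (f := fun u : R => u - N%:R)); last exact: h01_cont.
by apply: cvgB; [exact: cvg_id | exact: cvg_cst].
Qed.

Lemma Kf_cont {R : realType} (b : nat -> R) : continuous (Kf b).
Proof.
move=> x.
have E : Kf b x = KN b (Num.truncn x).+2 x by rewrite KN_ext // ltnW.
rewrite /continuous_at E.
apply: cvg_trans; last exact: KN_cont.
apply: near_eq_cvg; apply/nbhs_ballP; exists 1 => //= y; rewrite /ball /= => hy.
rewrite KN_ext // ltnS truncn_le_nat.
have := truncnS_gt x; rewrite -[(_.+2)%:R]natr1.
move: hy; rewrite ltr_norml; lra.
Qed.

Lemma KN_nonneg_sum {R : realType} (b : nat -> R) (N : nat) (r : R) :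
  (forall m, 0 <= b m) -> 0 <= \sum_(0 <= m < N) b m * h01 (r - m%:R).
Proof.
move=> b0; apply: sumr_ge0 => m _; apply: mulr_ge0 => //; exact: h01_ge0.
Qed.

Lemma Kf_incr {R : realType} (b : nat -> R) (x y : R) :
  (forall m, 0 <= b m) -> x < y -> Kf b x < Kf b y.
Proof.
move=> b0 xy.
set N := (Num.truncn x + Num.truncn y).+1.
rewrite -(@KN_ext _ b N x); last by rewrite ltnS leq_addr.
rewrite -(@KN_ext _ b N y); last by rewrite ltnS leq_addl.
rewrite /KN; apply: ltr_leD => //.
apply: ler_sum => m _; apply: ler_wpM2l => //.
apply: h01_mono; lra.
Qed.

Lemma Kf0 {R : realType} (b : nat -> R) : Kf b 0 = 0.
Proof.
by rewrite /Kf /KN truncn0 big_nat1 subr0 h01_le0 // mulr0 addr0.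
Qed.

Lemma Kf_ge0 {R : realType} (b : nat -> R) (r : R) :
  (forall m, 0 <= b m) -> 0 <= r -> 0 <= Kf b r.
Proof.
move=> b0 r0; rewrite /Kf /KN; apply: addr_ge0 => //; exact: KN_nonneg_sum.
Qed.

Lemma Kf_ge {R : realType} (b : nat -> R) (r : R) (m : nat) :
  (forall m, 0 <= b m) -> m.+1%:R <= r -> b m <= Kf b r.
Proof.
move=> b0 hr.
have r0 : 0 <= r by apply: le_trans hr.
have hm : (m.+1 <= (Num.truncn r).+1)%N.
  by rewrite ltnS; apply: ltnW; rewrite truncn_gt_nat.
rewrite /Kf /KN (big_cat_nat (leq0n m.+1) hm) /= big_nat_recr //=.
rewrite h01_ge1 ?mulr1; last first.
  by rewrite lerBrDl -[m.+1]addn1 natrD addrC in hr *.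
have := @KN_nonneg_sum _ b m r b0.
have : 0 <= \sum_(m.+1 <= i < (Num.truncn r).+1) b i * h01 (r - i%:R).
  apply: sumr_ge0 => i _; apply: mulr_ge0 => //; exact: h01_ge0.
lra.
Qed.

Definition betaf {R : realType} (b : nat -> R) (r t : R) : R := Kf b r * expR (- t).

Lemma Kf_pos {R : realType} (b : nat -> R) (r : R) :
  (forall m, 0 <= b m) -> 0 < r -> 0 < Kf b r.
Proof. by move=> b0 r0; rewrite -(Kf0 b); apply: Kf_incr. Qed.

Lemma betaKL {R : realType} (b : nat -> R) : (forall m, 0 <= b m) -> classKL (betaf b).
Proof.
move=> b0; split; [|split].
- apply: continuous_subspaceT => p; rewrite /betaf.
  apply: cvgM.
    apply: (continuous_comp (f := fst)); last exact: Kf_cont.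
    exact: cvg_fst.
  apply: (continuous_comp (f := fun p : R * R => - p.2)); last exact: continuous_expR.
  apply: cvgN; exact: cvg_snd.
- move=> t t0; split; [|split].
  + apply: continuous_subspaceT => r; rewrite /betaf.
    by apply: cvgM; [exact: Kf_cont | exact: cvg_cst].
  + move=> x y x0 xy; rewrite /betaf ltr_pM2r ?expR_gt0 //; exact: Kf_incr.
  + by rewrite /betaf Kf0 mul0r.
- move=> r r0; split.
  + move=> s t s0 st; rewrite /betaf ltr_pM2l ?Kf_pos // ltr_expR; lra.
  + rewrite /betaf -[X in _ --> X](mulr0 (Kf b r)).
    by apply: cvgM; [exact: cvg_cst | exact: cvgr_expR].
Qed.

Lemma within_eps (R : realType) (X : normedModType R) (f : R -> X) :
  {within [set t : R | 0 <= t], continuous f} ->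
  forall t, 0 <= t -> forall e, 0 < e ->
  exists2 del, 0 < del & forall s, 0 <= s -> `|s - t| < del -> `|f s - f t| < e.
Proof.
move=> cf t t0 e e0.
have : f @ within [set t : R | 0 <= t] (nbhs t) --> f t.
  rewrite (nbhs_subspace_in (A := [set t : R | 0 <= t]) t0); exact: cf.
move=> /cvgrPdist_lt /(_ e e0).
rewrite /within /= => /nbhs_ballP [del del0 H].
exists del => // s s0 st.
have := H s; rewrite /ball /= => /(_ _ s0).
by move=> h; rewrite distrC; apply: h; rewrite distrC.
Qed.

Lemma decrease (R : realType) (v : R -> R) (k a b : R) :
  0 < k -> 0 <= a -> a <= b ->
  (forall t, 0 <= t -> forall e, 0 < e ->
     exists2 del, 0 < del & forall s, 0 <= s -> `|s - t| < del -> `|v s - v t| < e) ->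
  (forall s, a <= s -> s < b -> forall e, 0 < e ->
     exists2 h, 0 < h < e & v (s + h) - v s < - (k * h)) ->
  v b + k * (b - a) <= v a.
Proof.
move=> k0 a0 ab vc vd.
pose w s := v s + k * (s - a).
pose S := [set s | a <= s <= b /\ w s <= w a].
have Sa : S a by split; rewrite ?lexx ?ab.
have hs : has_sup S.
  split; first by exists a.
  by exists b => s [/andP[_ ->]].
set s0 := sup S.
have as0 : a <= s0 by apply: sup_upper_bound.
have s0b : s0 <= b.
  by apply: ge_sup => //; [exists a | move=> s [/andP[_ ->]]].
have ws0 : w s0 <= w a.
  apply/ler_addgt0Pr => e e0.
  have e2 : 0 < e / 2 by rewrite divr_gt0.
  have [del del0 Hd] := vc s0 (le_trans a0 as0) (e / 2) e2.
  pose m := Num.min del (e / 2 / k).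
  have m0 : 0 < m by rewrite lt_min del0 /= divr_gt0.
  have [s [/andP[sa sb] ws] Hs] := sup_adherent m0 hs.
  have ss0 : s <= s0 by apply: sup_upper_bound => //; split=> //; apply/andP.
  have h1 : `|v s - v s0| < e / 2.
    apply: Hd; first exact: le_trans a0 sa.
    rewrite ler0_norm ?subr_le0 // opprB.
    have hm : m <= del by rewrite /m ge_min lexx.
    rewrite -/s0 in Hs; lra.
  have h2 : k * (s0 - s) <= e / 2.
    have -> : e / 2 = k * (e / 2 / k) by field; rewrite gt_eqF.
    apply: ler_wpM2l; first exact: ltW.
    have hm : m <= e / 2 / k by rewrite /m ge_min lexx orbT.
    rewrite -/s0 in Hs; lra.
  move: h1; rewrite ltr_norml => /andP[h1 h1'].
  move: ws; rewrite /w => ws.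
  have : k * (s0 - a) = k * (s0 - s) + k * (s - a) by ring.
  lra.
have [sb|s0b'] := eqVneq s0 b.
  by move: ws0; rewrite /w -sb; lra.
have s0lt : s0 < b by rewrite lt_neqAle s0b' s0b.
have bs0 : 0 < b - s0 by rewrite subr_gt0.
have [h /andP[h0 hb] Hh] := vd s0 as0 s0lt (b - s0) bs0.
have : S (s0 + h).
  split; first by apply/andP; split; lra.
  rewrite /w; move: ws0; rewrite /w.
  have : k * (s0 + h - a) = k * (s0 - a) + k * h by ring.
  lra.
move=> /(sup_upper_bound hs); rewrite -/s0; lra.
Qed.

Lemma classK_mono {R : realType} {g : R -> R} {a b : R} :
  classK g -> 0 <= a -> a <= b -> g a <= g b.
Proof.
move=> [_ [gi _]] a0; rewrite le_eqVlt => /orP[/eqP -> //|ab].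
by apply/ltW/gi.
Qed.

Lemma classK_ge0 {R : realType} {g : R -> R} {a : R} :
  classK g -> 0 <= a -> 0 <= g a.
Proof.
move=> gK a0; have := classK_mono gK (lexx 0) a0.
by case: gK => _ [_ ->].
Qed.

Lemma dist_ge0 {R : realType} {X : normedModType R} {A : set X} (x : X) :
  0 <= dist_set A x.
Proof.
rewrite /dist_set.
have [->|/set0P[y Ay]] := eqVneq A set0.
  by rewrite image_set0 inf0.
by apply: lb_le_inf; [exists `|x - y|, y | move=> _ [z _ <-]].
Qed.

Lemma dist_le {R : realType} {X : normedModType R} {A : set X} (x y : X) :
  A y -> dist_set A x <= `|x - y|.
Proof.
move=> Ay; rewrite /dist_set.
apply: ge_inf; last by exists y.
by exists 0 => _ [z _ <-].
Qed.

Lemma dist_lt {R : realType} {X : normedModType R} {A : set X} (x : X) (e : R) :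
  A !=set0 -> dist_set A x < e -> exists2 y, A y & `|x - y| < e.
Proof.
move=> [y0 Ay0] hd.
have hi : has_inf [set `|x - y| | y in A].
  by split; [exists `|x - y0|, y0 | exists 0 => _ [z _ <-]].
have e0 : 0 < e - dist_set A x by rewrite subr_gt0.
have [_ [y Ay <-] h] := inf_adherent e0 hi.
exists y => //; move: h; rewrite /dist_set; lra.
Qed.

Lemma dist_bound {R : realType} {X : normedModType R} {A : set X} (MA : R) (x : X) :
  0 <= MA -> (forall y, A y -> `|y| <= MA) -> dist_set A x <= `|x| + MA.
Proof.
move=> MA0 hA.
have [->|/set0P[y Ay]] := eqVneq A set0.
  by rewrite /dist_set image_set0 inf0 addr_ge0.
apply: (le_trans (dist_le x y Ay)).
by apply: le_trans (ler_normB _ _) _; rewrite lerD2l hA.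
Qed.

Lemma key {R : realType} {X E : normedModType R} {D : set E} {Dc : set (R -> E)}
  {phi : R -> X -> (R -> E) -> X} (A : set X) (V : X -> R) (alpha : R -> R) :
  is_system D Dc phi -> continuous V -> (forall x, 0 <= V x) -> classK alpha ->
  (forall x d, ~ A x -> Dc d -> (dini phi V x d <= (- alpha (dist_set A x))%:E)%E) ->
  forall x d a b, Dc d -> 0 <= a -> a <= b ->
  (forall s, a <= s -> s < b -> 1 < dist_set A (phi s x d)) ->
  alpha 1 / 2 * (b - a) <= V (phi a x d).
Proof.
move=> [_ [_ [hshift [_ [_ [_ [hcont hcoc]]]]]]] Vc V0 Kal hdini x d a b Dd a0 ab hdist.
have al1 : 0 < alpha 1.
  by case: (Kal) => _ [ai a00]; rewrite -a00; apply: ai.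
set k := alpha 1 / 2.
have k0 : 0 < k by rewrite divr_gt0.
have := @decrease R (fun s => V (phi s x d)) k a b k0 a0 ab.
have := V0 (phi b x d).
move=> Vb0 H; suff : V (phi b x d) + k * (b - a) <= V (phi a x d) by lra.
apply: H.
  apply: within_eps => t.
  apply: continuous_comp; [exact: hcont x d Dd t | exact: Vc].
move=> s sa sb e e0.
have s0 : 0 <= s by apply: le_trans sa.
have hA : ~ A (phi s x d).
  move=> As; have := hdist s sa sb.
  have := dist_le (phi s x d) (phi s x d) As; rewrite subrr normr0; lra.
have ds : Dc (fun u => d (s + u)).
  have := hshift d Dd s s0; congr Dc; apply: funext => u; by rewrite addrC.
have := hdini _ _ hA ds.
pose I := ereal_inf [set ((V (phi t (phi s x d) (fun u => d (s + u))) - V (phi s x d)) / t)%:E | t in [set t : R | 0 < t < e]].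
have hI : (I <= dini phi V (phi s x d) (fun u => d (s + u)%R))%E.
  by apply: ereal_sup_ubound; exists e.
have hal : k < alpha (dist_set A (phi s x d)).
  have := classK_mono Kal ler01 (ltW (hdist s sa sb)); rewrite /k; lra.
move=> hdn.
have : (I < (- k)%:E)%E.
  apply: (le_lt_trans hI); apply: (le_lt_trans hdn).
  by rewrite lte_fin ltrN2.
move=> /ereal_inf_lt [_ [h /andP[h0 he] <-]].
rewrite lte_fin hcoc // ?ltW // ltr_pdivrMr //.
move=> hq; exists h; first by rewrite h0 he.
lra.
Qed.

Theorem corollary24 (R : realType) (X E : normedModType R) (D : set E)
  (Dc : set (R -> E)) (phi : R -> X -> (R -> E) -> X) :
  is_system D Dc phi ->
  RFC Dc phi ->
  (exists (A : set X) (V : X -> R),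
     (exists M : R, forall y, A y -> `|y| <= M) /\ noncoercive_LF Dc phi A V) ->
  exists (beta : R -> R -> R) (c : R), classKL beta /\ 0 < c /\
    forall x d t, Dc d -> 0 <= t -> `|phi t x d| <= beta `|x| t + c.
Proof.
move=> sys rfc [A [V [[MA0 hA0] [Vc [V0 [VA [psi2 [alpha [[Kpsi _] [Kal [Vb Vd]]]]]]]]]]].
have sys' := sys.
case: sys' => [_ [_ [hshift [_ [hphi0 [_ [hcont hcoc]]]]]]].
set MA := Num.max MA0 0.
have MA0' : 0 <= MA by rewrite le_max lexx orbT.
have hA : forall y, A y -> `|y| <= MA.
  by move=> y Ay; rewrite le_max hA0.
have Vle : forall x, V x <= psi2 (`|x| + MA).
  move=> x; have [Ax|nAx] := pselect (A x).
    by rewrite VA //; apply: classK_ge0 => //; rewrite addr_ge0.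
  apply: le_trans (proj2 (Vb x nAx)) _.
  apply: classK_mono => //; first exact: dist_ge0.
  exact: dist_bound.
have AN : A !=set0.
  have [A0|/set0P //] := eqVneq A set0.
  have n0 : ~ A 0 by rewrite A0.
  have := Vb 0 n0; rewrite /dist_set A0 image_set0 inf0.
  by case: Kpsi => _ [_ ->]; lra.
have al1 : 0 < alpha 1.
  by case: (Kal) => _ [ai a00]; rewrite -a00; apply: ai.
set k := alpha 1 / 2.
have k0 : 0 < k by rewrite divr_gt0.
have shift : forall d s, Dc d -> 0 <= s -> Dc (fun u => d (s + u)).
  move=> d s Dd s0; have := hshift d Dd s s0; congr Dc; apply: funext => u; by rewrite addrC.
have MA2 : 0 < MA + 2 by lra.
have [M1 HM1] := rfc (MA + 2) 1 MA2 ltr01.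
set P1 := psi2 (Num.max M1 0 + MA).
have P10 : 0 <= P1 by apply: classK_ge0 => //; rewrite addr_ge0 // le_max lexx orbT.
set T1 := 1 + P1 / k.
have T10 : 0 < T1.
  rewrite /T1; have : 0 <= P1 / k by rewrite divr_ge0 // ltW.
  lra.
have [M2 HM2] := rfc (MA + 2) T1 MA2 T10.
pose Tf (r : R) := psi2 (r + MA) / k + 1.
have : forall n : nat, exists M, forall x d t, `|x| <= n.+1%:R -> Dc d -> 0 <= t <= Tf n.+1%:R ->
   `|phi t x d| <= M.
  move=> n; apply: rfc => //.
  rewrite /Tf; have : 0 <= psi2 (n.+1%:R + MA) / k.
    by rewrite divr_ge0 ?(ltW k0) //; apply: classK_ge0 => //; rewrite addr_ge0.
  lra.
move=> /choice [G HG].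
pose b (j : nat) := `|G j.+1| * expR (Tf j.+2%:R).
have b0 : forall j, 0 <= b j by move=> j; rewrite mulr_ge0 // expR_ge0.
exists (betaf b), (Num.max `|G 0%N| M2 + 1).
split; first exact: betaKL.
split; first by have := le_max `|G 0%N| `|G 0%N| M2; rewrite lexx /=; have := normr_ge0 (G 0%N); lra.
move=> x d t Dd t0.
have beta0 : 0 <= betaf b `|x| t by rewrite /betaf mulr_ge0 ?expR_ge0 // Kf_ge0.
have cM2 : M2 <= Num.max `|G 0%N| M2 by rewrite le_max lexx orbT.
have cG0 : `|G 0%N| <= Num.max `|G 0%N| M2 by rewrite le_max lexx.
pose Q := [set s | 0 <= s <= t /\ dist_set A (phi s x d) <= 1].
have [Qe|/set0P QN] := eqVneq Q set0.
- have hd : forall s, 0 <= s -> s < t -> 1 < dist_set A (phi s x d).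
    move=> s s0 st; rewrite ltNge; apply/negP => hs.
    have : Q s by split => //; rewrite s0 ltW.
    by rewrite Qe.
  have := key A V alpha sys Vc V0 Kal Vd x d 0 t Dd (lexx 0) t0 hd.
  rewrite hphi0 // subr0 -/k => hk.
  set m := Num.truncn `|x|.
  have xm : `|x| < m.+1%:R by exact: truncnS_gt.
  have ht : t <= Tf m.+1%:R.
    have : psi2 (`|x| + MA) <= psi2 (m.+1%:R + MA).
      by apply: classK_mono => //; [rewrite addr_ge0 | rewrite lerD2r ltW].
    have := Vle x; rewrite /Tf => h1 h2.
    have : t <= psi2 (m.+1%:R + MA) / k.
      by rewrite ler_pdivlMr // mulrC; lra.
    lra.
  have := HG m x d t (ltW xm) Dd; rewrite t0 ht => /(_ isT) hG.
  case Em : m => [|j].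
    by move: hG; rewrite Em => hG; have := ler_norm (G 0%N); lra.
  move: hG ht; rewrite Em => hG ht.
  have hx : j.+1%:R <= `|x| by rewrite -truncn_ge_nat // -/m Em.
  have := Kf_ge _ _ _ b0 hx.
  rewrite /betaf => hK.
  have : `|G j.+1| <= `|G j.+1| * expR (Tf j.+2%:R) * expR (- t).
    rewrite -mulrA -expRD -[X in X <= _]mulr1 ler_wpM2l //.
    have := expR_ge1Dx (Tf j.+2%:R - t); lra.
  have : `|G j.+1| * expR (Tf j.+2%:R) * expR (- t) <= Kf b `|x| * expR (- t).
    by rewrite ler_wpM2r ?expR_ge0.
  have := normr_ge0 (G 0%N); have := ler_norm (G j.+1); lra.
- have hQ : has_sup Q.
    by split => //; exists t => s [/andP[_ ->]].
  set q := sup Q.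
  have hh2 : 0 < 1 / 2 :> R by rewrite divr_gt0.
  have [s0 [/andP[s00 s0t] ds0] hs0] := sup_adherent hh2 hQ.
  have s0q : s0 <= q by apply: sup_upper_bound => //; split => //; rewrite s00.
  set c' := Num.min t (q + 1 / 2).
  have s0c : s0 <= c' by rewrite le_min s0t /=; lra.
  have ct : c' <= t by rewrite ge_min lexx.
  have cs1 : c' - s0 <= 1.
    have : c' <= q + 1 / 2 by rewrite ge_min lexx orbT.
    rewrite -/q in hs0; lra.
  have xs0 : `|phi s0 x d| <= MA + 2.
    have [y Ay hy] := dist_lt (phi s0 x d) 2 AN (le_lt_trans ds0 (ltr1n R 2) : dist_set A (phi s0 x d) < 2).
    have := ler_normD (phi s0 x d - y) y; rewrite subrK.
    have := hA y Ay; lra.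
  have ds := shift d s0 Dd s00.
  have Ec : phi (c' - s0) (phi s0 x d) (fun u => d (s0 + u)) = phi c' x d.
    by rewrite hcoc // ?subr_ge0 // addrC subrK.
  have xc : `|phi c' x d| <= M1.
    by rewrite -Ec; apply: HM1 => //; rewrite subr_ge0 s0c.
  have hd : forall s, c' <= s -> s < t -> 1 < dist_set A (phi s x d).
    move=> s cs st; rewrite ltNge; apply/negP => hs.
    have Qs : Q s by split => //; rewrite (ltW st) andbT; lra.
    have := sup_upper_bound hQ Qs; rewrite -/q.
    move: cs; rewrite ge_min leNgt st /=; lra.
  have := key A V alpha sys Vc V0 Kal Vd x d c' t Dd (le_trans s00 s0c) ct hd.
  have := Vle (phi c' x d).
  have : psi2 (`|phi c' x d| + MA) <= P1.
    apply: classK_mono => //; first by rewrite addr_ge0.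
    by rewrite lerD2r le_max xc.
  move=> h1 h2; rewrite -/k => h3.
  have : t - c' <= P1 / k by rewrite ler_pdivlMr // mulrC; lra.
  move=> h4.
  have Et : phi (t - s0) (phi s0 x d) (fun u => d (s0 + u)) = phi t x d.
    by rewrite hcoc // ?subr_ge0 // addrC subrK.
  have : `|phi t x d| <= M2.
    rewrite -Et; apply: HM2 => //; rewrite subr_ge0 s0t /= /T1; lra.
  lra.
Qed.
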